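(* Let $f$ be an $n$-variable Boolean function with $f\neq\delta_0$ and $f^c\neq\delta_0$. Then $|{FAI}(f^c)-{FAI}(f)|\le 2$.
   Context: An $n$-variable Boolean function is a map $\mathbb{F}_2^n\to\mathbb{F}_2$, with algebraic degree $\deg$ the degree of its algebraic normal form (ANF). $\delta_0$ is the indicator function of $\{0\}\subseteq\mathbb{F}_2^n$. The algebraic complement $f^c$ of $f$ is the function whose ANF consists of exactly the monomials $\prod_{i\in I}x_i$, $I\subseteq\{1,\dots,n\}$, that do not appear in the ANF of $f$; equivalently $f^c=f+\delta_0$. ${AN}^c(f)$ is the set of $g$ with $f\cdot g\neq0$, and ${FAI}(f)$ is the minimum of $\deg(g)+\deg(f\cdot g)$ over $g\in{AN}^c(f)$, $g\neq 1$. *)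

(* Defs.v *)
From mathcomp Require Import all_boot.
Set Implicit Arguments. Unset Strict Implicit. Unset Printing Implicit Defensive.

Definition BV (n : nat) := {ffun 'I_n -> bool}.

Definition BF (n : nat) := {ffun BV n -> bool}.

Definition supp n (x : BV n) : {set 'I_n} := [set i | x i].

(* ANF coefficient of the monomial prod_{i in I} x_i (Moebius transform):
   a_I = sum_{x : supp x \subset I} f(x) over F_2. *)
Definition anf n (f : BF n) (I : {set 'I_n}) : bool :=
  \big[addb/false]_(x : BV n | supp x \subset I) f x.

(* Algebraic degree: largest size of a monomial occurring in the ANF
   (0 for the zero function). *)
Definition deg n (f : BF n) : nat := \max_(I : {set 'I_n} | anf f I) #|I|.

Definition bfmul n (f g : BF n) : BF n := [ffun x => f x && g x].
Definition bfadd n (f g : BF n) : BF n := [ffun x => addb (f x) (g x)].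
Definition bf0 n : BF n := [ffun _ => false].
Definition bf1 n : BF n := [ffun _ => true].

Definition delta0 n : BF n := [ffun x => x == [ffun _ => false]].

Definition fcompl n (f : BF n) : BF n := bfadd f (delta0 n).

Definition inANc n (f g : BF n) : bool := bfmul f g != bf0 n.

(* FAI(f) = min { deg g + deg (f g) : g in AN^c(f), g <> 1 }.
   The default value 2n+1 of the fold is only returned if the set is empty
   (every admissible value is <= 2n). *)
Definition FAI n (f : BF n) : nat :=
  \big[minn/(n.*2).+1]_(g : BF n | inANc f g && (g != bf1 n))
     (deg g + deg (bfmul f g)).

(* Main.v *)
Require Import Defs.
From mathcomp Require Import all_boot.
Set Implicit Arguments. Unset Strict Implicit. Unset Printing Implicit Defensive.

Section S.
Variable n : nat.
Implicit Types f g h : BF n.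

Lemma bigmin_le (I : finType) (P : pred I) (F : I -> nat) d i :
  P i -> \big[minn/d]_(j | P j) F j <= F i.
Proof.
move=> Pi; rewrite -[X in X <= _]/(\big[minn/d]_(j <- index_enum I | P j) F j).
have: i \in index_enum I by rewrite mem_index_enum.
elim: (index_enum I) => // a r IH; rewrite in_cons big_cons.
case/orP => [/eqP <-|ir]; first by rewrite Pi geq_minl.
case: (P a); last exact: IH.
by rewrite geq_min IH ?orbT.
Qed.

Lemma bigmin_idx (I : finType) (P : pred I) (F : I -> nat) d :
  \big[minn/d]_(j | P j) F j <= d.
Proof.
rewrite -[X in X <= _]/(\big[minn/d]_(j <- index_enum I | P j) F j).
elim: (index_enum I) => [|a r IH]; rewrite ?big_nil ?big_cons //.
by case: (P a) => //; rewrite geq_min IH orbT.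
Qed.

Lemma bigmin_arg (I : finType) (P : pred I) (F : I -> nat) d :
  \big[minn/d]_(j | P j) F j = d \/
  exists2 i, P i & \big[minn/d]_(j | P j) F j = F i.
Proof.
elim/big_ind: _; first by left.
- move=> x y Hx Hy; rewrite /minn; case: ifP => _; [exact: Hx|exact: Hy].
- by move=> i Pi; right; exists i.
Qed.

Lemma deg_le h d : (forall I, anf h I -> #|I| <= d) -> deg h <= d.
Proof. by move=> H; apply/bigmax_leqP => I; apply: H. Qed.

Lemma deg_le_n h : deg h <= n.
Proof. apply: deg_le => I _; by rewrite -[X in _ <= X]card_ord max_card. Qed.

Lemma anf_le_deg h I : anf h I -> #|I| <= deg h.
Proof. by move=> H; apply: (@leq_bigmax_cond {set 'I_n} (fun I => anf h I) (fun I => #|I|) I H). Qed.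

Definition xi (i : 'I_n) : BF n := [ffun x : BV n => x i].
Definition flip (j : 'I_n) (x : BV n) : BV n :=
  [ffun k => if k == j then ~~ x k else x k].

Lemma flipK j : involutive (flip j).
Proof.
move=> x; apply/ffunP => k; rewrite !ffunE; case: eqP => // _; exact: negbK.
Qed.

Lemma supp_flip j (I : {set 'I_n}) x : j \in I -> (supp (flip j x) \subset I) = (supp x \subset I).
Proof.
move=> jI; apply/subsetP/subsetP => H k; move: (H k); rewrite !inE !ffunE;
  case: eqP => [->|] //= _ _; by rewrite jI.
Qed.

Lemma anf_flip h (I : {set 'I_n}) j : j \in I -> (forall x, h (flip j x) = h x) -> anf h I = false.
Proof.
move=> jI Hh; rewrite /anf (bigID (fun x : BV n => x j)) /=.
set S := (X in addb X _).
suff -> : S = \big[addb/false]_(x | (supp x \subset I) && ~~ x j) h x by rewrite addbb.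
rewrite /S (reindex_inj (inv_inj (flipK j))) /=.
apply: eq_big => x; first by rewrite supp_flip // ffunE eqxx.
by rewrite Hh.
Qed.

Lemma deg_xi i : deg (xi i) <= 1.
Proof.
apply: deg_le => I.
case: (boolP [exists j, (j \in I) && (j != i)]).
  case/existsP => j /andP [jI ji]; rewrite (@anf_flip _ _ j) //.
  by move=> x; rewrite !ffunE eq_sym (negbTE ji).
rewrite negb_exists => /forallP H _.
have: I \subset [set i].
  by apply/subsetP => k kI; move: (H k); rewrite kI inE /= negbK.
by move/subset_leq_card; rewrite cards1.
Qed.

Lemma supp_sub_D1 (I : {set 'I_n}) i x :
  (supp x \subset I :\ i) = (supp x \subset I) && ~~ x i.
Proof.
apply/subsetP/andP => [H|[/subsetP H xi0] k].
  split; first by apply/subsetP => k /H; rewrite inE => /andP[].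
  by apply/negP => xi1; move: (H i); rewrite !inE eqxx xi1 => /(_ isT).
rewrite !inE => xk; rewrite H ?inE // andbT; apply/eqP => ki.
by move: xi0; rewrite -ki xk.
Qed.

Lemma anf_mul_xi h (I : {set 'I_n}) i :
  anf (bfmul h (xi i)) I = (i \in I) && addb (anf h I) (anf h (I :\ i)).
Proof.
rewrite /anf; case: (boolP (i \in I)) => iI /=; last first.
  apply: big1 => x /subsetP H; rewrite !ffunE; apply/andP => -[_ xi1].
  by move: (H i); rewrite inE xi1 (negbTE iI) => /(_ isT).
rewrite (bigID (fun x : BV n => x i)) /= [in RHS](bigID (fun x : BV n => x i)) /=.
rewrite (@big1 _ _ _ _ _ (fun x => (supp x \subset I) && ~~ x i)); last first.
  by move=> x /andP[_ /negbTE xi0]; rewrite !ffunE xi0 andbF.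
rewrite (eq_bigl (fun x => (supp x \subset I) && ~~ x i) _ (supp_sub_D1 I i)).
rewrite addbF -addbA addbb addbF.
by apply: eq_bigr => x /andP[_ xi1]; rewrite !ffunE xi1 andbT.
Qed.

Lemma deg_mul_xi h i : deg (bfmul h (xi i)) <= (deg h).+1.
Proof.
apply: deg_le => I; rewrite anf_mul_xi => /andP[iI].
case: (boolP (anf h I)) => [H _|_ /= H].
  by apply: leq_trans (anf_le_deg H) _.
by rewrite (cardsD1 i I) iI add1n ltnS anf_le_deg.
Qed.

Definition zv : BV n := [ffun _ => false].

Lemma deg_delta0 : n <= deg (delta0 n).
Proof.
have H : anf (delta0 n) setT.
  rewrite /anf (bigD1 zv) ?subsetT //= ffunE eqxx /=.
  by rewrite big1 // => x /andP[_ /negbTE]; rewrite ffunE.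
by move: (anf_le_deg H); rewrite cardsT card_ord.
Qed.

Lemma nz_coord (y : BV n) : y != zv -> exists i, y i.
Proof.
move=> yz; apply/existsP; apply: contraR yz; rewrite negb_exists => /forallP H.
by apply/eqP/ffunP => k; rewrite ffunE; apply/negbTE.
Qed.

Lemma mul_c0 f g : g zv = false -> bfmul (fcompl f) g = bfmul f g.
Proof.
move=> g0; apply/ffunP => x; rewrite !ffunE.
case: (eqVneq x zv) => [->|xz]; first by rewrite g0 !andbF.
by rewrite addbF.
Qed.

Lemma inANcP f g : reflect (exists z, f z && g z) (inANc f g).
Proof.
apply: (iffP idP) => [H|[z Hz]].
  apply/existsP; apply: contraR H; rewrite negb_exists => /forallP H.
  by apply/eqP/ffunP => z; rewrite !ffunE; apply/negbTE.
by apply/eqP => /ffunP /(_ z); rewrite !ffunE Hz.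
Qed.

Lemma xi0 i : xi i zv = false.
Proof. by rewrite !ffunE. Qed.

Lemma neq1 g : g zv = false -> g != bf1 n.
Proof. by move=> g0; apply/eqP => /ffunP /(_ zv); rewrite g0 ffunE. Qed.

Lemma key f y : y != zv -> f y -> FAI (fcompl f) <= FAI f + 2.
Proof.
move=> yz fy; rewrite /FAI.
set P := fun g : BF n => inANc f g && (g != bf1 n).
case: (bigmin_arg P (fun g => deg g + deg (bfmul f g)) (n.*2).+1) => [->|[g /andP[Hg g1] ->]].
  by apply: leq_trans (bigmin_idx _ _ _) _; rewrite addn2 leqW.
case g0 : (g zv).
  case: (boolP [exists z, (z != zv) && (f z && g z)]).
    case/existsP => z /andP[zz fgz].
    have [i zi] := nz_coord zz.
    have g'0 : bfmul g (xi i) zv = false by rewrite ffunE xi0 andbF.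
    have E : bfmul (fcompl f) (bfmul g (xi i)) = bfmul (bfmul f g) (xi i).
      rewrite mul_c0 //; apply/ffunP => x; rewrite !ffunE; exact: andbA.
    apply: (leq_trans (@bigmin_le _ _ _ _ (bfmul g (xi i)) _)).
      rewrite neq1 // andbT; apply/inANcP; exists z.
      move/ffunP: E => /(_ z); rewrite ![in RHS]ffunE zi andbT fgz.
      by rewrite ffunE => ->.
    rewrite E; apply: leq_trans (leq_add (deg_mul_xi g i) (deg_mul_xi _ i)) _.
    by rewrite addSn addnS addn2.
  rewrite negb_exists => /forallP Hz.
  have Efg : bfmul f g = delta0 n.
    case/inANcP: Hg => z fgz.
    apply/ffunP => x; rewrite !ffunE; case: (eqVneq x zv) => [->|xz].
      move: (Hz z) fgz; case: (eqVneq z zv) => [->|] //= _ /negbTE ->.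
      by [].
    by move: (Hz x); rewrite xz /= => /negbTE.
  have [i yi] := nz_coord yz.
  apply: (leq_trans (@bigmin_le _ _ _ _ (xi i) _)).
    rewrite neq1 ?xi0 // andbT; apply/inANcP; exists y.
    by rewrite !ffunE yi andbT fy (negbTE yz).
  rewrite mul_c0 ?xi0 // Efg addn2.
  apply: (@leq_trans n.+1); first by rewrite -add1n; apply: leq_add; [apply: deg_xi | apply: deg_le_n].
  rewrite ltnS; apply: leq_trans (deg_delta0) _; rewrite leqW // leq_addl.
  by []. 
apply: (leq_trans (@bigmin_le _ _ _ _ (g) _)).
  rewrite g1 andbT; move: Hg; rewrite /inANc mul_c0 //.
by rewrite mul_c0 // leq_addr.
Qed.

Lemma fcomplK f : fcompl (fcompl f) = f.
Proof. by apply/ffunP => x; rewrite !ffunE -addbA addbb addbF. Qed.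

Lemma fcompl_nz f y : y != zv -> fcompl f y = f y.
Proof. by move=> yz; rewrite !ffunE; have := negbTE yz; rewrite /zv => ->; rewrite addbF. Qed.

Lemma exists_nz f : f != delta0 n -> fcompl f != delta0 n ->
  exists2 y, y != zv & f y.
Proof.
move=> H1 H2.
case: (boolP [exists y, (y != zv) && f y]) => [/existsP[y /andP[]]|]; first by exists y.
rewrite negb_exists => /forallP H.
case f0 : (f zv).
  case/eqP: H1; apply/ffunP => x; rewrite ffunE.
  case: (eqVneq x zv) => [->|xz]; first by rewrite f0.
  by move: (H x); rewrite xz /= => /negbTE ->.
case/eqP: H2; apply/ffunP => x; rewrite !ffunE.
case: (eqVneq x zv) => [->|xz]; first by rewrite f0.
by move: (H x); rewrite xz /= => /negbTE ->.
Qed.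
End S.

Theorem proposition13 (n : nat) (f : BF n) :
  f != delta0 n -> fcompl f != delta0 n ->
  (FAI (fcompl f) <= FAI f + 2) /\ (FAI f <= FAI (fcompl f) + 2).
Proof.
move=> H1 H2; have [y yz fy] := exists_nz H1 H2.
split; first exact: key yz fy.
rewrite -{1}(fcomplK f); apply: (key yz); by rewrite fcompl_nz.
Qed.
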